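(* Let $\Gamma$ be a second countable locally compact abelian group, $n\ge2$, $\omega\in\Gamma^n$. An $\omega$-invariant subset $X$ of $\Gamma$ is good if and only if every $\gamma\in X$ satisfies one of: (i) there exists $i\in\{1,\ldots,n\}$ such that $\gamma-m\omega_i\in X$ and $\gamma-m\omega_i\ne\gamma$ for every positive integer $m$; (ii) there exist $i\ne j$ in $\{1,\ldots,n\}$ such that $\gamma-m\omega_i-\omega_j\in X$ for every positive integer $m$.
   Context: A closed $X\subset\Gamma$ is $\omega$-invariant if $X+\omega_i\subset X$ for all $i$ and every $\gamma\in X$ has some $i$ with $\gamma-\omega_i\in X$. An $\omega$-invariant $X$ is bad if there is $\gamma\in X$ such that there is exactly one $i\in\{1,\ldots,n\}$ with $\gamma-\omega_i\in X$ and this $i$ satisfies $m\omega_i=0$ for some positive integer $m$; $X$ is good if it is not bad. *)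

(* Defs.v *)
From HB Require Import structures.
From mathcomp Require Import all_boot all_order all_algebra.
From mathcomp Require Import all_classical all_reals all_analysis.
Set Implicit Arguments. Unset Strict Implicit. Unset Printing Implicit Defensive.
Import Order.TTheory GRing.Theory Num.Theory.
Local Open Scope classical_set_scope.
Local Open Scope ring_scope.

Definition omega_invariant (G : topologicalZmodType) (n : nat)
    (om : 'I_n -> G) (X : set G) : Prop :=
  closed X /\
  (forall (i : 'I_n) (g : G), X g -> X (g + om i)) /\
  (forall g : G, X g -> exists i : 'I_n, X (g - om i)).

Definition bad (G : topologicalZmodType) (n : nat)
    (om : 'I_n -> G) (X : set G) : Prop :=
  exists g : G, X g /\
    exists i : 'I_n,
      X (g - om i) /\
      (forall j : 'I_n, X (g - om j) -> j = i) /\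
      (exists m : nat, (0 < m)%N /\ om i *+ m = 0).

Definition good (G : topologicalZmodType) (n : nat)
    (om : 'I_n -> G) (X : set G) : Prop :=
  ~ bad om X.

(* Main.v *)
Require Import Defs.
From HB Require Import structures.
From mathcomp Require Import all_boot all_order all_algebra.
From mathcomp Require Import all_classical all_reals all_analysis.
From mathcomp Require Import zify.
Import Order.TTheory GRing.Theory Num.Theory.
Local Open Scope classical_set_scope.
Local Open Scope ring_scope.

Lemma up1 (G : zmodType) (n : nat) (om : 'I_n -> G) (X : set G) :
  (forall i g, X g -> X (g + om i)) ->
  forall i k g, X g -> X (g + om i *+ k).
Proof.
move=> H i; elim=> [|k IH] g Xg; first by rewrite mulr0n addr0.
by rewrite mulrSr addrA; apply: H; apply: IH.
Qed.

Arguments up1 {G n om X}.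

Lemma upF (G : zmodType) (n : nat) (om : 'I_n -> G) (X : set G) :
  (forall i g, X g -> X (g + om i)) ->
  forall (c : 'I_n -> nat) g, X g -> X (g + \sum_(i < n) om i *+ c i).
Proof.
move=> H c g Xg.
have : forall s g, X g -> X (g + \sum_(i <- s) om i *+ c i).
  elim=> [|a s IH] h Xh; first by rewrite big_nil addr0.
  by rewrite big_cons addrA; apply: IH; apply: (up1 H).
by move=> /(_ (index_enum _) g Xg).
Qed.

Arguments upF {G n om X}.

Lemma chain (G : zmodType) (n : nat) (om : 'I_n -> G) (X : set G) :
  (forall g, X g -> exists i, X (g - om i)) ->
  forall L g, X g -> exists c : 'I_n -> nat,
    (\sum_(i < n) c i)%N = L /\ X (g - \sum_(i < n) om i *+ c i).
Proof.
move=> H; elim=> [|L IH] g Xg.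
  exists (fun _ => 0%N); split; first by rewrite big1.
  by rewrite big1 ?subr0 // => i _; rewrite mulr0n.
have [c [Hc Xc]] := IH g Xg.
have [i0 Xi0] := H _ Xc.
exists (fun j => c j + (j == i0))%N; split.
  rewrite big_split /= Hc (bigD1 i0) //= big1; last by move=> j /eqP Hj; case: (j =P i0).
  by case: (i0 =P i0) => // _; rewrite addn0 addn1.
rewrite (eq_bigr (fun j => om j *+ c j + om j *+ (j == i0))); last first.
  by move=> j _; rewrite mulrnDr.
have S1 : \sum_(j < n) om j *+ (j == i0) = om i0.
  rewrite (bigD1 i0) //= big1; last by move=> j /eqP Hj; case: (j =P i0) => // _; rewrite mulr0n.
  by case: (i0 =P i0) => // _; rewrite addr0 mulr1n.
by rewrite big_split /= S1 opprD addrA.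
Qed.

Arguments chain {G n om X}.

Theorem lemma4p3 (G : topologicalZmodType)
    (hG_haus : hausdorff_space G)
    (hG_lc : locally_compact [set: G])
    (hG_sc : @second_countable G)
    (n : nat) (hn : (2 <= n)%N) (om : 'I_n -> G) (X : set G)
    (hX : omega_invariant om X) :
  good om X <->
  (forall g : G, X g ->
     (exists i : 'I_n, forall m : nat, (0 < m)%N ->
        X (g - om i *+ m) /\ g - om i *+ m <> g) \/
     (exists i j : 'I_n, i <> j /\ forall m : nat, (0 < m)%N ->
        X (g - om i *+ m - om j))).
Proof.
case: hX => _ [Hup Hdown].
split; last first.
  move=> H [g [Xg [i [Xgi [Huniq [m0 [m0pos Hm0]]]]]]].
  case: (H g Xg) => [[k Hk]|[i' [j' [Hij Hm]]]].
    have [Xk _] := Hk 1%N isT; rewrite mulr1n in Xk.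
    have Eki := Huniq _ Xk; subst k.
    have [_ Hne] := Hk m0 m0pos; apply: Hne.
    by move: Hm0 => ->; rewrite subr0.
  have X1 := Hm 1%N isT; rewrite mulr1n in X1.
  have X1' := Hup j' _ X1; rewrite subrK in X1'.
  have Ei := Huniq _ X1'; subst i'.
  have X2 := Hm m0 m0pos; move: X2; move: (Hm0) => -> ; rewrite subr0 => X2.
  have Ej := Huniq _ X2.
  by apply: Hij; rewrite Ej.
move=> Hgood g Xg.
have [i Hray] : exists i, forall m, X (g - om i *+ m).
  apply: contrapT => Hno.
  have Hno' : forall i, exists m, ~ X (g - om i *+ m).
    move=> i; apply: contrapT => Hc; apply: Hno; exists i => m.
    by apply: contrapT => Hm; apply: Hc; exists m.
  have [Mf HMf] := choice Hno'.
  pose M := (\sum_(i < n) Mf i)%N.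
  have [c [Hc Xc]] := chain Hdown (n * M) g Xg.
  have [i Hi] : exists i, (Mf i <= c i)%N.
    apply: contrapT => Hn.
    have Hlt : forall i, (c i < M)%N.
      move=> i; have : ~ (Mf i <= c i)%N by move=> h; apply: Hn; exists i.
      move/negP; rewrite -ltnNge => h; apply: (leq_trans h).
      by rewrite /M (bigD1 i) //= leq_addr.
    have : (\sum_(i < n) (c i).+1 <= \sum_(i < n) M)%N by apply: leq_sum.
    rewrite sum_nat_const card_ord.
    have -> : (\sum_(i < n) (c i).+1 = \sum_(i < n) c i + \sum_(i < n) 1)%N.
      by rewrite -big_split /=; apply: eq_bigr => j _; rewrite addn1.
    rewrite Hc sum_nat_const card_ord muln1; lia.
  apply: (HMf i).
  pose c2 := fun j => if j == i then (c i - Mf i)%N else c j.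
  have E : \sum_(j < n) om j *+ c j = \sum_(j < n) om j *+ c2 j + om i *+ Mf i.
    rewrite (bigD1 i) //= [in RHS](bigD1 i) //= /c2 eqxx.
    rewrite addrAC -mulrnDr subnK //; congr (_ + _).
    by apply: eq_bigr => j /negbTE ->.
  have := upF Hup c2 _ Xc.
  by rewrite E opprD addrA addrAC subrK.
case: (pselect (exists m0, (0 < m0)%N /\ om i *+ m0 = 0)) => [[m0 [m0pos Hm0]]|Hinf].
  right.
  have [j [Hji Xj]] : exists j, j <> i /\ X (g - om j).
    apply: contrapT => Hno; apply: Hgood.
    exists g; split=> //; exists i; split; first by have := Hray 1%N; rewrite mulr1n.
    split; last by exists m0.
    move=> j Xj; apply: contrapT => Hji; apply: Hno; exists j; split=> //.
  exists i, j; split; first by move=> E; apply: Hji.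
  move=> m _.
  have := up1 Hup i (m * (m0 - 1)) _ Xj.
  have -> : om i *+ (m * (m0 - 1)) = - (om i *+ m).
    apply/eqP; rewrite -subr_eq0 opprK -mulrnDr.
    have -> : (m * (m0 - 1) + m = m0 * m)%N by rewrite -mulnSr subn1 prednK // mulnC.
    by rewrite mulrnA Hm0 mul0rn.
  by rewrite -addrA [- om j + _]addrC addrA.
left; exists i => m mpos; split=> // E; apply: Hinf; exists m; split=> //.
have := addKr g (- (om i *+ m)).
by rewrite E addNr => /esym /eqP; rewrite oppr_eq0 => /eqP.
Qed.
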